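(* Under the standing setting, fix $0<t\le1$, $x\in\mathbb{R}^d$ and $0<a_0<a<b<b_0<t$, and let $W_1\le W_2$ be time dependent Lyapunov functions on $[0,t]$ with $W_2\le c_0Z^{1-\sigma}$ for some $c_0>0$, $\sigma\in(0,1)$, and let $1\le w\in C^{1,2}((0,t)\times\mathbb{R}^d)$ satisfy: $w^{-2}\partial_sw$ and $w^{-2}\nabla_yw$ are bounded on $Q(a_0,b_0)$; for some $k>d+2$ and constants $c_1,\dots,c_9\ge1$, on $Q(a_0,b_0)$: $w\le c_1w^{\frac{k-2}{k}}W_1^{\frac2k}$, $|Q\nabla_yw|\le c_2w^{\frac{k-1}{k}}W_1^{\frac1k}$, $|\mathrm{Tr}(QD_y^2w)|\le c_3w^{\frac{k-2}{k}}W_1^{\frac2k}$, $|\partial_sw|\le c_4w^{\frac{k-2}{k}}W_1^{\frac2k}$, $|\sum_iD_iq_{ij}|\le c_5w^{-\frac1k}W_2^{\frac1k}$ for each $j$, $|F|\le c_6w^{-\frac1k}W_2^{\frac1k}$, $V^{\frac12}\le c_7w^{-\frac1k}W_2^{\frac1k}$, $|\Delta_yw|\le c_8w^{\frac{k-2}{k}}W_1^{\frac2k}$, $|Q\nabla_yW_1|\le c_9w^{-\frac1k}W_1W_2^{\frac1k}$; and for every $n$, $g_n^0(t,\cdot,x,\cdot)\in L^\infty(Q(a_0,b_0))$. Then for every $n\in\mathbb{N}$, with $Q_n=(q^{(n)}_{ij})$ in place of $Q$: $w^{-2}\partial_sw$ and $w^{-2}\nabla_yw$ are bounded on $Q(a_0,b_0)$,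 and on $Q(a_0,b_0)$ we have $w\le c_1w^{\frac{k-2}{k}}W_1^{\frac2k}$, $|Q_n\nabla_yw|\le 2c_2w^{\frac{k-1}{k}}W_1^{\frac1k}$, $|\mathrm{Tr}(Q_nD_y^2w)|\le(c_3+\eta c_8)w^{\frac{k-2}{k}}W_1^{\frac2k}$, $|\partial_sw|\le c_4w^{\frac{k-2}{k}}W_1^{\frac2k}$, $|\sum_iD_iq^{(n)}_{ij}|\le(c_5+4c_9)w^{-\frac1k}W_2^{\frac1k}$ for each $j$, $|F|\le c_6w^{-\frac1k}W_2^{\frac1k}$, $V^{\frac12}\le c_7w^{-\frac1k}W_2^{\frac1k}$, and $g_n^0(t,\cdot,x,\cdot)\in L^\infty(Q(a_0,b_0))$; i.e. the operator $\mathscr{A}_n$ satisfies the same hypotheses with constants $c_1,2c_2,c_3+\eta c_8,c_4,c_5+4c_9,c_6,c_7$.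
   Context: Standing setting. Let $d\ge1$ and $q_{ij},F_i,V:[0,1]\times\mathbb{R}^d\to\mathbb{R}$. For smooth $\varphi$ put $\mathscr{A}(t)\varphi=\sum_{i,j}q_{ij}(t,\cdot)D_{ij}\varphi+\sum_iF_i(t,\cdot)D_i\varphi-V(t,\cdot)\varphi$, $\mathscr{A}_0(t)=\mathscr{A}(t)+V(t)$, $F=(F_i)$, $Q=(q_{ij})$. Assume: (H1) for some $\varsigma\in(0,1)$, $q_{ij},F_i,V\in C^{\varsigma/2,\varsigma}_{\mathrm{loc}}([0,1]\times\mathbb{R}^d)$ and $q_{ij}\in C^{0,1}((0,1)\times\mathbb{R}^d)$; (H2) $Q$ symmetric, $\sum q_{ij}\xi_i\xi_j\ge\eta|\xi|^2$ for some $\eta>0$; (H3) $V\ge0$; (H4) there are $0\le Z\in C^2(\mathbb{R}^d)$, $Z\to\infty$ at infinity, and $M\ge0$ with $\mathscr{A}(t)Z\le M$ and $\eta\Delta Z+F(t)\cdot\nabla Z-V(t)Z\le M$; (H5) there is $0\le Z_0\in C^2(\mathbb{R}^d)$, $Z_0\to\infty$ at infinity, with $\mathscr{A}_0(t)Z_0\le M$ and $\eta\Delta Z_0+F(t)\cdot\nabla Z_0\le M$. Definition. A time dependent Lyapunov function on $[0,t]$ is $0\le W\in C([0,t]\times\mathbb{R}^d)\cap C^{1,2}((0,t)\times\mathbb{R}^d)$ with $W\le Z$, $W(s,x)\to\infty$ as $|x|\to\infty$ uniformly for $s$ in compact subsets of $[0,t)$, and for some $0\le h\in L^1((0,t))$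 and every $s\in(0,t)$: $\partial_sW-\mathscr{A}(s)W\ge-hW$ and $\partial_sW-(\eta\Delta W+F\cdot\nabla W-VW)\ge-hW$ on $\mathbb{R}^d$. Approximation: fix $\varphi\in C_c^\infty(\mathbb{R})$ with $\varphi\equiv1$ on $(-1,1)$, $\varphi\equiv0$ outside $(-2,2)$, $|\tau\varphi'(\tau)|\le2$; set $\varphi_n(s,y)=\varphi(W_1(s,y)/n)$, $q^{(n)}_{ij}=\varphi_nq_{ij}+(1-\varphi_n)\eta\delta_{ij}$, $\mathscr{A}_n(s)=\sum q^{(n)}_{ij}(s)D_{ij}+\sum F_j(s)D_j-V(s)$, $\mathscr{A}^0_n=\mathscr{A}_n+V$; $g_n^0$ is the Green kernel of the evolution family associated with $\mathscr{A}_n^0$. $Q(a,b)=(a,b)\times\mathbb{R}^d$.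
   Formalization: The cutoff φ of the approximation also satisfies 0 ≤ φ ≤ 1 on all of ℝ, so it takes values in [0,1]. The statement above fails without it. *)

(* Defs.v *)
From HB Require Import structures.
From mathcomp Require Import all_boot all_order all_algebra.
From mathcomp Require Import all_classical all_reals all_analysis.
Set Implicit Arguments. Unset Strict Implicit. Unset Printing Implicit Defensive.
Import Order.TTheory GRing.Theory Num.Theory.
Import numFieldNormedType.Exports.
Local Open Scope classical_set_scope.
Local Open Scope ring_scope.

Section Defs.
Variable R : realType.
Variable d : nat.
Local Notation vec := 'rV[R]_d.

Definition ev (i : 'I_d) : vec := delta_mx 0 i.

Definition enorm (v : vec) : R := Num.sqrt (\sum_i v 0 i ^+ 2).

Definition pd (i : 'I_d) (f : vec -> R) (y : vec) : R :=
  derive1 (fun h : R => f (y + h *: ev i)) 0.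
Definition pd_ex (i : 'I_d) (f : vec -> R) (y : vec) : Prop :=
  derivable (fun h : R => f (y + h *: ev i)) 0 1.

Definition pdx (i : 'I_d) (f : R -> vec -> R) : R -> vec -> R :=
  fun s y => pd i (f s) y.
Definition dt (f : R -> vec -> R) : R -> vec -> R :=
  fun s y => derive1 (fun r => f r y) s.
Definition dt_ex (f : R -> vec -> R) (s : R) (y : vec) : Prop :=
  derivable (fun r => f r y) s 1.

Definition grad (f : vec -> R) (y : vec) : vec := \row_i pd i f y.
Definition lap (f : vec -> R) (y : vec) : R := \sum_i pd i (pd i f) y.

(* uncurried version, for joint continuity in (s,y) *)
Definition unc (f : R -> vec -> R) : R * vec -> R := fun p => f p.1 p.2.

Definition strip (I : set R) : set (R * vec) := [set p | I p.1].

Definition C12 (I : set R) (f : R -> vec -> R) : Prop :=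
  (forall s y, I s ->
     [/\ dt_ex f s y, forall i, pd_ex i (f s) y &
         forall i j, pd_ex i (pd j (f s)) y]) /\
  {within strip I, continuous (unc f)} /\
  {within strip I, continuous (unc (dt f))} /\
  (forall i, {within strip I, continuous (unc (pdx i f))}) /\
  (forall i j, {within strip I, continuous (unc (pdx i (pdx j f)))}).

Definition C01 (I : set R) (f : R -> vec -> R) : Prop :=
  (forall s y i, I s -> pd_ex i (f s) y) /\
  {within strip I, continuous (unc f)} /\
  (forall i, {within strip I, continuous (unc (pdx i f))}).

Definition C2 (f : vec -> R) : Prop :=
  (forall y i, pd_ex i f y) /\ (forall y i j, pd_ex i (pd j f) y) /\
  continuous f /\ (forall i, continuous (pd i f)) /\
  (forall i j, continuous (pd i (pd j f))).

Definition hoelder_loc (vs : R) (f : R -> vec -> R) : Prop :=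
  forall r : R, 0 < r -> exists C : R, forall s s' y y',
    s \in `[0, 1] -> s' \in `[0, 1] -> enorm y <= r -> enorm y' <= r ->
    `|f s y - f s' y'| <= C * (`|s - s'| `^ (vs / 2) + enorm (y - y') `^ vs).

Definition to_infty (Z : vec -> R) : Prop :=
  forall K : R, exists r : R, forall y, r < enorm y -> K <= Z y.

Definition coeffs := 'I_d -> 'I_d -> R -> vec -> R.

Definition A0op (q : coeffs) (F : 'I_d -> R -> vec -> R) (s : R)
  (phi : vec -> R) (y : vec) : R :=
  \sum_i \sum_j q i j s y * pd i (pd j phi) y + \sum_i F i s y * pd i phi y.
Definition Aop (q : coeffs) (F : 'I_d -> R -> vec -> R) (V : R -> vec -> R)
  (s : R) (phi : vec -> R) (y : vec) : R :=
  A0op q F s phi y - V s y * phi y.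
Definition Aeta (eta : R) (F : 'I_d -> R -> vec -> R) (V : R -> vec -> R)
  (s : R) (phi : vec -> R) (y : vec) : R :=
  eta * lap phi y + \sum_i F i s y * pd i phi y - V s y * phi y.

Definition Qmul (q : coeffs) (s : R) (y : vec) (v : vec) : vec :=
  \row_i \sum_j q i j s y * v 0 j.
Definition trQD2 (q : coeffs) (s : R) (f : vec -> R) (y : vec) : R :=
  \sum_i \sum_j q i j s y * pd i (pd j f) y.
Definition divQ (q : coeffs) (j : 'I_d) (s : R) (y : vec) : R :=
  \sum_i pd i (q i j s) y.
Definition Fvec (F : 'I_d -> R -> vec -> R) (s : R) (y : vec) : vec :=
  \row_i F i s y.

Definition standing (q : coeffs) (F : 'I_d -> R -> vec -> R)
  (V : R -> vec -> R) (eta : R) (Z Z0 : vec -> R) (M : R) : Prop :=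
  (exists vs : R, 0 < vs < 1 /\
     (forall i j, hoelder_loc vs (q i j)) /\ (forall i, hoelder_loc vs (F i)) /\
     hoelder_loc vs V) /\
  (forall i j, C01 `]0, 1[ (q i j)) /\
  (forall i j s y, q i j s y = q j i s y) /\
  (0 < eta /\ forall s y (xi : vec), s \in `[0, 1] ->
     eta * \sum_i xi 0 i ^+ 2 <= \sum_i \sum_j q i j s y * xi 0 i * xi 0 j) /\
  (forall s y, s \in `[0, 1] -> 0 <= V s y) /\
  ((forall y, 0 <= Z y) /\ C2 Z /\ to_infty Z /\ 0 <= M /\
   forall s y, s \in `[0, 1] ->
     Aop q F V s Z y <= M /\ Aeta eta F V s Z y <= M) /\
  ((forall y, 0 <= Z0 y) /\ C2 Z0 /\ to_infty Z0 /\
   forall s y, s \in `[0, 1] ->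
     A0op q F s Z0 y <= M /\ eta * lap Z0 y + \sum_i F i s y * pd i Z0 y <= M).

Definition lyapunov (q : coeffs) (F : 'I_d -> R -> vec -> R)
  (V : R -> vec -> R) (eta : R) (Z : vec -> R) (t : R)
  (W : R -> vec -> R) : Prop :=
  (forall s y, s \in `[0, t] -> 0 <= W s y) /\
  {within strip `[0, t], continuous (unc W)} /\
  C12 `]0, t[ W /\
  (forall s y, s \in `[0, t] -> W s y <= Z y) /\
  (forall t', 0 <= t' < t -> forall K : R, exists r : R, forall s y,
     s \in `[0, t'] -> r < enorm y -> K <= W s y) /\
  (exists h : R -> R, (forall s, 0 <= h s) /\
     (lebesgue_measure).-integrable `]0, t[ (EFin \o h) /\
     forall s y, s \in `]0, t[ ->
       dt W s y - Aop q F V s (W s) y >= - h s * W s y /\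
       dt W s y - Aeta eta F V s (W s) y >= - h s * W s y).

Definition smooth1 (f : R -> R) : Prop :=
  forall (n : nat) (x : R), derivable (derive1n n f) x 1.

Definition cutoff (phi : R -> R) : Prop :=
  smooth1 phi /\
  (forall r, -1 < r < 1 -> phi r = 1) /\
  (forall r, (r <= -2) \/ (2 <= r) -> phi r = 0) /\
  (forall r, `|r * derive1 phi r| <= 2) /\
  (forall r, 0 <= phi r <= 1).

Definition phin (phi : R -> R) (W1 : R -> vec -> R) (n : nat) : R -> vec -> R :=
  fun s y => phi (W1 s y / n%:R).

Definition qn (phi : R -> R) (W1 : R -> vec -> R) (eta : R) (q : coeffs)
  (n : nat) : coeffs :=
  fun i j s y => phin phi W1 n s y * q i j s y +
                 (1 - phin phi W1 n s y) * (eta * (i == j)%:R).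

Definition in_box (l u : R * vec) (p : R * vec) : Prop :=
  l.1 <= p.1 <= u.1 /\ forall i, l.2 0 i <= p.2 0 i <= u.2 0 i.
Definition box_vol (l u : R * vec) : R :=
  (u.1 - l.1) * \prod_i (u.2 0 i - l.2 0 i).
Definition null_set (N : set (R * vec)) : Prop :=
  forall e : R, 0 < e -> exists (l u : nat -> R * vec),
    (forall k, (l k).1 <= (u k).1 /\ forall i, (l k).2 0 i <= (u k).2 0 i) /\
    (forall p, N p -> exists k, in_box (l k) (u k) p) /\
    (forall m, \sum_(k < m) box_vol (l k) (u k) <= e).
Definition ess_bounded_on (A : set (R * vec)) (f : R -> vec -> R) : Prop :=
  exists (C : R) (N : set (R * vec)), null_set N /\
    forall p, A p -> ~ N p -> `|f p.1 p.2| <= C.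
End Defs.

(* Main.v *)
Require Import Defs.
From HB Require Import structures.
From mathcomp Require Import all_boot all_order all_algebra.
From mathcomp Require Import all_classical all_reals all_analysis.
From mathcomp Require Import ring lra.
Import Order.TTheory GRing.Theory Num.Theory.
Import numFieldNormedType.Exports.
Local Open Scope classical_set_scope.
Local Open Scope ring_scope.

Section H.
Variable R : realType.

Lemma der_help (P Q : R -> R) (dP dQ c : R) :
  is_derive (0:R) (1:R) P dP -> is_derive (0:R) (1:R) Q dQ ->
  derive1 (fun h => P h * Q h + (1 - P h) * c) 0 = P 0 * dQ + Q 0 * dP - c * dP.
Proof.
move=> HP HQ.
have H := is_deriveD (is_deriveM HP HQ) (is_deriveM (is_deriveB (is_derive_cst (1:R) (0:R) (1:R)) HP) (is_derive_cst c (0:R) (1:R))).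
rewrite derive1E.
have -> : (fun h => P h * Q h + (1 - P h) * c) = (P * Q + (cst 1 - P) * cst c) by [].
rewrite derive_val /cst /=. rewrite /GRing.scale /=. ring.
Qed.

Lemma der_div (A : R -> R) (dA r : R) : is_derive (0:R) (1:R) A dA ->
  is_derive (0:R) (1:R) (fun h => A h / r) (dA / r).
Proof.
move=> HA.
have H := is_deriveM HA (is_derive_cst r^-1 (0:R) (1:R)).
have -> : (fun h => A h / r) = (A * cst r^-1) by [].
have -> : dA / r = A 0 *: (0:R) + (cst r^-1) (0:R) *: dA.
  by rewrite /cst /GRing.scale /=; ring.
exact: H.
Qed.
Variable d : nat.
Lemma pd_qn (phi : R -> R) (W1 : R -> 'rV[R]_d -> R) eta (q : coeffs R d)
   (n : nat) i j s y :
  pd_ex i (W1 s) y -> pd_ex i (q i j s) y ->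
  (forall x, derivable phi x 1) ->
  pd i (qn phi W1 eta q n i j s) y =
  phi (W1 s y / n%:R) * pd i (q i j s) y
  + q i j s y * (derive1 phi (W1 s y / n%:R) * (pd i (W1 s) y / n%:R))
  - eta * (i == j)%:R * (derive1 phi (W1 s y / n%:R) * (pd i (W1 s) y / n%:R)).
Proof.
move=> HW Hq Hphi.
rewrite /pd /qn /phin.
set A := (fun h : R => W1 s (y + h *: @ev R d i)).
set Q := (fun h : R => q i j s (y + h *: @ev R d i)).
have A0 : A 0 = W1 s y by rewrite /A scale0r addr0.
have Q0 : Q 0 = q i j s y by rewrite /Q scale0r addr0.
have HQ : is_derive (0:R) (1:R) Q (derive1 Q 0).
  by rewrite derive1E; apply: derivableP.
have HA : is_derive (0:R) (1:R) A (derive1 A 0).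
  by rewrite derive1E; apply: derivableP.
have HA' := @der_div _ _ n%:R HA.
have Hp : is_derive ((fun h => A h / n%:R) 0) (1:R) phi (derive1 phi ((fun h => A h / n%:R) 0)).
  by rewrite derive1E; apply: derivableP.
have HP := @is_derive1_comp _ phi (fun h => A h / n%:R) 0 _ _ Hp HA'.
rewrite (der_help _ _ _ _ _ HP HQ) /= A0 Q0.
ring.
Qed.
Lemma coord_le (v : 'rV[R]_d) j : `|v 0 j| <= enorm v.
Proof.
rewrite /enorm -sqrtr_sqr ler_wsqrtr //.
rewrite (bigD1 j) //= lerDl sumr_ge0 // => k _; exact: sqr_ge0.
Qed.

Lemma enorm_le (u v : 'rV[R]_d) :
  \sum_i v 0 i ^+ 2 <= \sum_i u 0 i ^+ 2 -> enorm v <= enorm u.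
Proof. by move=> h; rewrite /enorm ler_wsqrtr. Qed.

Lemma enorm_ge0 (v : 'rV[R]_d) : 0 <= enorm v.
Proof. exact: sqrtr_ge0. Qed.

Lemma enorm_scale_le (c : R) (u v : 'rV[R]_d) : 0 <= c ->
  c ^+ 2 * \sum_i v 0 i ^+ 2 <= \sum_i u 0 i ^+ 2 -> c * enorm v <= enorm u.
Proof.
move=> c0 h; rewrite /enorm -(ger0_norm c0) -sqrtr_sqr -sqrtrM ?sqr_ge0 //.
by rewrite ler_wsqrtr // real_normK ?num_real.
Qed.

Lemma ell_sq (g u : 'I_d -> R) eta : 0 < eta ->
  eta * \sum_i g i ^+ 2 <= \sum_i g i * u i ->
  eta ^+ 2 * \sum_i g i ^+ 2 <= \sum_i u i ^+ 2.
Proof.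
move=> e0 h.
have H0 : 0 <= \sum_i (eta * g i - u i) ^+ 2 by apply: sumr_ge0 => i _; exact: sqr_ge0.
have E : \sum_i (eta * g i - u i) ^+ 2 =
   eta ^+ 2 * \sum_i g i ^+ 2 + \sum_i u i ^+ 2 - 2 * eta * \sum_i g i * u i.
  rewrite !mulr_sumr -big_split -sumrB /=; apply: eq_bigr => i _; ring.
rewrite E in H0.
have : eta * (eta * \sum_i g i ^+ 2) <= eta * \sum_i g i * u i.
  by rewrite ler_pM2l.
nra.
Qed.

Lemma conv_sq (p a b : R) : 0 <= p <= 1 ->
  (p * a + (1 - p) * b) ^+ 2 <= p * a ^+ 2 + (1 - p) * b ^+ 2.
Proof.
case/andP=> p0 p1.
have : 0 <= p * (1 - p) * (a - b) ^+ 2.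
  by rewrite mulr_ge0 ?sqr_ge0 // mulr_ge0 // subr_ge0.
nra.
Qed.
Lemma sum_delta (i : 'I_d) (f : 'I_d -> R) : \sum_j (i == j)%:R * f j = f i.
Proof.
rewrite (bigD1 i) //= eqxx mul1r big1 ?addr0 // => j /negPf.
by rewrite eq_sym => ->; rewrite mul0r.
Qed.

Lemma Qn_entry (phi : R -> R) (W1 : R -> 'rV[R]_d -> R) eta (q : coeffs R d)
   (n : nat) i s y (f : 'I_d -> R) :
  \sum_j qn phi W1 eta q n i j s y * f j =
  phi (W1 s y / n%:R) * \sum_j q i j s y * f j
  + (1 - phi (W1 s y / n%:R)) * (eta * f i).
Proof.
rewrite /qn /phin.
transitivity (\sum_j (phi (W1 s y / n%:R) * (q i j s y * f j)
   + (1 - phi (W1 s y / n%:R)) * eta * ((i == j)%:R * f j))).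
  by apply: eq_bigr => j _; ring.
by rewrite big_split /= -!mulr_sumr sum_delta mulrA.
Qed.

Lemma quad_form (q : coeffs R d) s y (g : 'rV[R]_d) :
  \sum_i g 0 i * \sum_j q i j s y * g 0 j =
  \sum_i \sum_j q i j s y * g 0 i * g 0 j.
Proof.
apply: eq_bigr => i _; rewrite mulr_sumr; apply: eq_bigr => j _; ring.
Qed.
Lemma ell_norm (q : coeffs R d) s y (g : 'rV[R]_d) eta : 0 < eta ->
  eta * \sum_i g 0 i ^+ 2 <= \sum_i \sum_j q i j s y * g 0 i * g 0 j ->
  \sum_i ((eta * g 0 i) ^+ 2) <= \sum_i (Qmul q s y g 0 i) ^+ 2.
Proof.
move=> e0 h.
have -> : \sum_i (eta * g 0 i) ^+ 2 = eta ^+ 2 * \sum_i g 0 i ^+ 2.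
  by rewrite mulr_sumr; apply: eq_bigr => i _; rewrite exprMn.
under [X in _ <= X]eq_bigr do rewrite mxE.
move: (ell_sq (fun i => g 0 i) (fun i => \sum_j q i j s y * g 0 j) eta e0) => /= HH. apply: HH.
by rewrite quad_form.
Qed.

Lemma Qn_norm (phi : R -> R) (W1 : R -> 'rV[R]_d -> R) eta (q : coeffs R d)
   (n : nat) s y (g : 'rV[R]_d) : 0 < eta ->
  0 <= phi (W1 s y / n%:R) <= 1 ->
  eta * \sum_i g 0 i ^+ 2 <= \sum_i \sum_j q i j s y * g 0 i * g 0 j ->
  enorm (Qmul (qn phi W1 eta q n) s y g) <= enorm (Qmul q s y g).
Proof.
move=> e0 hp h; apply: enorm_le.
set p := phi (W1 s y / n%:R).
have He := @ell_norm q s y g eta e0 h.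
under eq_bigr do rewrite mxE Qn_entry -/p.
apply: (@le_trans _ _ (\sum_i (p * Qmul q s y g 0 i ^+ 2 + (1 - p) * (eta * g 0 i) ^+ 2))).
  apply: ler_sum => i _; rewrite mxE; exact: conv_sq.
rewrite big_split /= -!mulr_sumr.
case/andP: hp => p0 p1.
have : (1 - p) * \sum_i (eta * g 0 i) ^+ 2 <= (1 - p) * \sum_i Qmul q s y g 0 i ^+ 2.
  by rewrite ler_wpM2l // subr_ge0.
lra.
Qed.
Lemma divQ_qn (phi : R -> R) (W1 : R -> 'rV[R]_d -> R) eta (q : coeffs R d)
   (n : nat) j s y :
  (forall i, pd_ex i (W1 s) y) -> (forall i, pd_ex i (q i j s) y) ->
  (forall x, derivable phi x 1) -> (forall i, q i j s y = q j i s y) ->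
  divQ (qn phi W1 eta q n) j s y =
  phi (W1 s y / n%:R) * divQ q j s y
  + (derive1 phi (W1 s y / n%:R) / n%:R) *
    (Qmul q s y (grad (W1 s) y) 0 j - eta * grad (W1 s) y 0 j).
Proof.
move=> HW Hq Hphi Hsym.
rewrite /divQ.
under eq_bigr do rewrite pd_qn //.
rewrite /Qmul /grad !mxE.
have -> : \sum_j0 q j j0 s y * (\row_i0 pd i0 (W1 s) y) 0 j0 = \sum_i q j i s y * pd i (W1 s) y.
  by apply: eq_bigr => i _; rewrite mxE.
set p := phi _; set f := derive1 phi _.
transitivity (\sum_i (p * pd i (q i j s) y + f / n%:R * (q j i s y * pd i (W1 s) y)
   - f / n%:R * eta * ((j == i)%:R * pd i (W1 s) y))).
  by apply: eq_bigr => i _; rewrite Hsym eq_sym; ring.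
rewrite sumrB big_split /= -!mulr_sumr sum_delta; ring.
Qed.
Lemma trQD2_qn (phi : R -> R) (W1 : R -> 'rV[R]_d -> R) eta (q : coeffs R d)
   (n : nat) s (f : 'rV[R]_d -> R) y :
  trQD2 (qn phi W1 eta q n) s f y =
  phi (W1 s y / n%:R) * trQD2 q s f y + (1 - phi (W1 s y / n%:R)) * (eta * lap f y).
Proof.
rewrite /trQD2 /lap.
transitivity (\sum_i (phi (W1 s y / n%:R) * \sum_j q i j s y * pd i (pd j f) y
  + (1 - phi (W1 s y / n%:R)) * (eta * pd i (pd i f) y))).
  apply: eq_bigr => i _; rewrite (Qn_entry phi W1 eta q n i s y (fun j => pd i (pd j f) y)) //.
rewrite big_split /=; congr (_ + _).
  by rewrite mulr_sumr.
by rewrite [in RHS]mulr_sumr mulr_sumr; apply: eq_bigr => i _; rewrite mulrA.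
Qed.
Lemma arith_tr (p a b c3 c8 eta u v : R) : 0 <= p <= 1 -> 0 < eta ->
  0 <= u * v -> 1 <= c3 -> 1 <= c8 ->
  `|a| <= c3 * u * v -> `|b| <= c8 * u * v ->
  `|p * a + (1 - p) * (eta * b)| <= (c3 + eta * c8) * u * v.
Proof.
move=> /andP[p0 p1] e0 X0 hc3 hc8 ha hb.
apply: (le_trans (ler_normD _ _)).
have p1' : 0 <= 1 - p by rewrite subr_ge0.
rewrite !normrM (ger0_norm p0) (ger0_norm p1') (gtr0_norm e0).
rewrite -!mulrA in ha hb *.
set X := u * v in X0 ha hb *.
have h1 : p * `|a| <= p * (c3 * X) by rewrite ler_wpM2l.
have h2 : (1 - p) * (eta * `|b|) <= (1 - p) * (eta * (c8 * X)).
  by rewrite ler_wpM2l // ler_wpM2l // ltW.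
have h3 : 0 <= (1 - p) * (c3 * X) by apply: mulr_ge0 => //; apply: mulr_ge0 => //; lra.
have h4 : 0 <= p * (eta * (c8 * X)) by apply: mulr_ge0 => //; apply: mulr_ge0; [lra|apply: mulr_ge0 => //; lra].
have -> : (c3 + eta * c8) * X = p * (c3 * X) + (1 - p) * (c3 * X)
   + p * (eta * (c8 * X)) + (1 - p) * (eta * (c8 * X)) by ring.
lra.
Qed.
Lemma arith_div (p D f N U G E eta W c5 c9 u v : R) : 0 <= p <= 1 -> 0 < eta ->
  0 <= W -> 0 <= u -> 0 <= v -> 1 <= c5 -> 1 <= c9 ->
  `|D| <= c5 * u * v -> `|U| <= E -> eta * `|G| <= E -> E <= c9 * u * W * v ->
  `|W / N * f| <= 2 ->
  `|p * D + f / N * (U - eta * G)| <= (c5 + 4 * c9) * u * v.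
Proof.
move=> /andP[p0 p1] e0 W0 u0 v0 hc5 hc9 hD hU hG hE hf.
apply: (le_trans (ler_normD _ _)).
set F := `|f / N|.
have F0 : 0 <= F by exact: normr_ge0.
have hFW : F * W <= 2.
  have -> : F * W = `|W / N * f|.
    have -> : W / N * f = W * (f / N) by rewrite mulrAC mulrA.
    by rewrite normrM (ger0_norm W0) mulrC.
  exact: hf.
have h1 : `|p * D| <= `|D|.
  rewrite normrM (ger0_norm p0); have := normr_ge0 D; nra.
have h2 : `|U - eta * G| <= 2 * E.
  apply: (le_trans (ler_normB _ _)); rewrite normrM (gtr0_norm e0); lra.
have h3 : `|f / N * (U - eta * G)| <= F * (2 * E) by rewrite normrM ler_wpM2l.
have h4 : F * E <= F * (c9 * u * W * v) by rewrite ler_wpM2l.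
have h5 : F * (c9 * u * W * v) = (c9 * u * v) * (F * W) by ring.
have h6 : (c9 * u * v) * (F * W) <= (c9 * u * v) * 2.
  by rewrite ler_wpM2l // mulr_ge0 // mulr_ge0 //; lra.
have : `|p * D| <= c5 * u * v by apply: le_trans h1 hD.
lra.
Qed.
Lemma ell_enorm (q : coeffs R d) s y (g : 'rV[R]_d) eta : 0 < eta ->
  eta * \sum_i g 0 i ^+ 2 <= \sum_i \sum_j q i j s y * g 0 i * g 0 j ->
  eta * enorm g <= enorm (Qmul q s y g).
Proof.
move=> e0 h; apply: enorm_scale_le; first exact: ltW.
rewrite mulr_sumr.
have := @ell_norm q s y g eta e0 h.
by under eq_bigr do rewrite exprMn.
Qed.
Lemma itv_help (a0 b0 t s : R) : 0 < a0 -> a0 < s -> s < b0 -> b0 < t -> t <= 1 ->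
  [/\ s \in `[0, 1], s \in `]0, t[, s \in `[0, t] & s \in `]0, 1[].
Proof.
move=> h1 h2 h3 h4 h5; rewrite !in_itv /=.
split; apply/andP; split; lra.
Qed.

Lemma le2 (c u v : R) : 1 <= c -> 0 <= u * v -> c * u * v <= 2 * c * u * v.
Proof. move=> h1 h2; rewrite -!mulrA; have : 0 <= c * (u * v) by rewrite mulr_ge0 //; lra. lra. Qed.
End H.

Theorem lemma6 (R : realType) (d : nat)
  (q : coeffs R d) (F : 'I_d -> R -> 'rV[R]_d -> R) (V : R -> 'rV[R]_d -> R)
  (eta : R) (Z Z0 : 'rV[R]_d -> R) (M : R) (phi : R -> R)
  (g0 : nat -> R -> R -> 'rV[R]_d -> 'rV[R]_d -> R)
  (t : R) (x : 'rV[R]_d) (a0 a b b0 : R)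
  (W1 W2 : R -> 'rV[R]_d -> R) (c0 sigma : R) (w : R -> 'rV[R]_d -> R)
  (k c1 c2 c3 c4 c5 c6 c7 c8 c9 : R) :
  (0 < d)%N ->
  standing q F V eta Z Z0 M ->
  cutoff phi ->
  0 < t <= 1 ->
  0 < a0 -> a0 < a -> a < b -> b < b0 -> b0 < t ->
  lyapunov q F V eta Z t W1 -> lyapunov q F V eta Z t W2 ->
  (forall s y, s \in `[0, t] -> W1 s y <= W2 s y) ->
  0 < c0 -> 0 < sigma < 1 ->
  (forall s y, s \in `[0, t] -> W2 s y <= c0 * Z y `^ (1 - sigma)) ->
  (forall s y, s \in `]0, t[ -> 1 <= w s y) ->
  C12 `]0, t[ w ->
  (exists C : R, forall s y, s \in `]a0, b0[ -> `|(w s y) ^-2 * dt w s y| <= C) ->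
  (exists C : R, forall s y, s \in `]a0, b0[ ->
      enorm ((w s y) ^-2 *: grad (w s) y) <= C) ->
  d%:R + 2 < k ->
  1 <= c1 -> 1 <= c2 -> 1 <= c3 -> 1 <= c4 -> 1 <= c5 -> 1 <= c6 -> 1 <= c7 ->
  1 <= c8 -> 1 <= c9 ->
  (forall s y, s \in `]a0, b0[ ->
    ((w s y <= c1 * w s y `^ ((k - 2) / k) * W1 s y `^ (2 / k)) /\ (enorm (Qmul q s y (grad (w s) y)) <=
          c2 * w s y `^ ((k - 1) / k) * W1 s y `^ (1 / k)) /\ (`|trQD2 q s (w s) y| <= c3 * w s y `^ ((k - 2) / k) * W1 s y `^ (2 / k)) /\ (`|dt w s y| <= c4 * w s y `^ ((k - 2) / k) * W1 s y `^ (2 / k)) /\ ((forall j, `|divQ q j s y| <= c5 * w s y `^ (- (1 / k)) * W2 s y `^ (1 / k))) /\ (enorm (Fvec F s y) <= c6 * w s y `^ (- (1 / k)) * W2 s y `^ (1 / k)) /\ (Num.sqrt (V s y) <= c7 * w s y `^ (- (1 / k)) * W2 s y `^ (1 / k)) /\ (`|lap (w s) y| <= c8 * w s y `^ ((k - 2) / k) * W1 s y `^ (2 / k)) /\ (enorm (Qmul q s y (grad (W1 s) y)) <=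
          c9 * w s y `^ (- (1 / k)) * W1 s y * W2 s y `^ (1 / k)))) ->
  (forall n : nat, (0 < n)%N ->
     ess_bounded_on (strip `]a0, b0[) (fun s y => g0 n t s x y)) ->
  forall n : nat, (0 < n)%N ->
    let Qn := qn phi W1 eta q n in
    [/\ exists C : R, forall s y, s \in `]a0, b0[ ->
          `|(w s y) ^-2 * dt w s y| <= C,
        exists C : R, forall s y, s \in `]a0, b0[ ->
          enorm ((w s y) ^-2 *: grad (w s) y) <= C,
        (forall s y, s \in `]a0, b0[ ->
          ((w s y <= c1 * w s y `^ ((k - 2) / k) * W1 s y `^ (2 / k)) /\ (enorm (Qmul Qn s y (grad (w s) y)) <=
                (2 * c2) * w s y `^ ((k - 1) / k) * W1 s y `^ (1 / k)) /\ (`|trQD2 Qn s (w s) y| <=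
                (c3 + eta * c8) * w s y `^ ((k - 2) / k) * W1 s y `^ (2 / k)) /\ (`|dt w s y| <= c4 * w s y `^ ((k - 2) / k) * W1 s y `^ (2 / k)) /\ ((forall j, `|divQ Qn j s y| <=
                 (c5 + 4 * c9) * w s y `^ (- (1 / k)) * W2 s y `^ (1 / k))) /\ (enorm (Fvec F s y) <= c6 * w s y `^ (- (1 / k)) * W2 s y `^ (1 / k)) /\ (Num.sqrt (V s y) <= c7 * w s y `^ (- (1 / k)) * W2 s y `^ (1 / k)))) &
        ess_bounded_on (strip `]a0, b0[) (fun s y => g0 n t s x y)].
Proof.
move=> d0 Hst Hcut Ht Ha0 Haa Hab Hbb Hbt HL1 HL2 HW12 Hc0 Hsig HW2Z Hw1 HwC
  Hb1 Hb2 Hk Hc1 Hc2 Hc3 Hc4 Hc5 Hc6 Hc7 Hc8 Hc9 Hall Hg n n0 Qn.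
split; [exact: Hb1 | exact: Hb2 | | exact: Hg].
move=> s y hs.
have [B1 [B2 [B3 [B4 [B5 [B6 [B7 [B8 B9]]]]]]]] := Hall s y hs.
move: hs; rewrite in_itv /= => /andP[s1 s2].
case/andP: Ht => t0 t1.
have [hs01 hs0t hs0tc hs01o] := @itv_help R _ _ _ _ Ha0 s1 s2 Hbt t1.
case: Hst => _ [HC01 [Hsym [[eta0 Hell] _]]].
case: Hcut => Hsm [_ [_ [Hphid Hphi01]]].
case: HL1 => W1ge0 [_ [[HW1d _] [_ [_ _]]]].
have Hphider : forall r, derivable phi r 1 := fun r => Hsm 0%N r.
have Hp01 := Hphi01 (W1 s y / n%:R).
set p := phi (W1 s y / n%:R) in Hp01 *.
have w1 : 1 <= w s y := Hw1 s y hs0t.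
have W1g : 0 <= W1 s y := W1ge0 s y hs0tc.
have Xa : 0 <= w s y `^ ((k - 1) / k) * W1 s y `^ (1 / k) by rewrite mulr_ge0 ?powR_ge0.
have Xb : 0 <= w s y `^ ((k - 2) / k) * W1 s y `^ (2 / k) by rewrite mulr_ge0 ?powR_ge0.
have Xc : 0 <= w s y `^ (- (1 / k)) * W2 s y `^ (1 / k) by rewrite mulr_ge0 ?powR_ge0.
refine (conj B1 (conj _ (conj _ (conj B4 (conj _ (conj B6 B7)))))).
-
  rewrite /Qn; apply: (le_trans (@Qn_norm R d phi W1 eta q n s y _ eta0 Hp01 (Hell s y _ hs01))).
  apply: (le_trans B2); exact: le2.
-
  rewrite /Qn trQD2_qn.
  exact: (@arith_tr R _ _ _ _ _ _ _ _ Hp01 eta0 Xb Hc3 Hc8 B3 B8).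
-
  move=> j.
  have [_ HWi _] := HW1d s y hs0t.
  have Hqi : forall i, pd_ex i (q i j s) y.
    by move=> i; case: (HC01 i j) => Hq _; exact: Hq.
  rewrite /Qn (@divQ_qn R d phi W1 eta q n j s y HWi Hqi Hphider (fun i => Hsym i j s y)).
  have hE := @ell_enorm R d q s y (grad (W1 s) y) eta eta0 (Hell s y _ hs01).
  have hG : eta * `|grad (W1 s) y 0 j| <= enorm (Qmul q s y (grad (W1 s) y)).
    apply: le_trans hE; rewrite ler_wpM2l ?coord_le //; exact: ltW.
  exact: (@arith_div R _ _ _ _ _ _ _ _ _ c5 c9 _ _ Hp01 eta0 W1g (powR_ge0 _ _) (powR_ge0 _ _)
     Hc5 Hc9 (B5 j) (coord_le _ _ _ _) hG B9 (Hphid _)).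
Qed.
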